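(* Let $q$ be a prime power, let $\alpha$ be a primitive element of $\mathbb{F}_{q^n}$, and let $1\le t_1<\cdots<t_r<n$ be divisors of $n$ such that $t_i$ divides $t_{i+1}$ for $1\le i\le r-1$. Let $\mathcal{F}=(\mathbb{F}_{q^{t_1}},\ldots,\mathbb{F}_{q^{t_r}})$ be the Galois flag of this type on $\mathbb{F}_{q^n}$. Let $\beta\in\mathbb{F}_{q^n}^*$ with $\langle\beta\rangle=\langle\alpha^l\rangle$ for a divisor $l$ of $q^n-1$. For $1\le i\le r$ put $c_i=\frac{q^n-1}{q^{t_i}-1}$ and $l_i=\mathrm{lcm}(l,c_i)$. Then: (1) $d_f(\mathrm{Orb}_\beta(\mathcal{F}))=0$ if and only if $l_1=l_r=l$; (2) $d_f(\mathrm{Orb}_\beta(\mathcal{F}))=2\sum_{i=1}^r t_i$ if and only if $l_1=l_r\neq l$; (3) $d_f(\mathrm{Orb}_\beta(\mathcal{F}))=2\sum_{i=1}^{j-1}t_i$ if and only if $l_1\neq l_r$ and $j\in\{2,\ldots,r\}$ is the minimum index such that $l_1\neq l_j$.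
   Context: $\mathbb{F}_{q^n}$ is regarded as an $\mathbb{F}_q$-vector space. For $\gamma\in\mathbb{F}_{q^n}^*$, $\mathcal{U}\gamma=\{u\gamma:u\in\mathcal{U}\}$ and $\mathcal{F}\gamma=(\mathcal{F}_1\gamma,\ldots,\mathcal{F}_r\gamma)$. For $\beta$ of multiplicative order $|\beta|$, $\mathrm{Orb}_\beta(\mathcal{F})=\{\mathcal{F}\beta^j:0\le j\le|\beta|-1\}$. Subspace distance: $d_S(\mathcal{U},\mathcal{V})=\dim(\mathcal{U}+\mathcal{V})-\dim(\mathcal{U}\cap\mathcal{V})$; flag distance $d_f(\mathcal{F},\mathcal{F}')=\sum_{i=1}^r d_S(\mathcal{F}_i,\mathcal{F}'_i)$. The minimum distance $d_f(\mathcal{C})$ of a set of flags is the minimum flag distance between distinct elements, and $0$ if $|\mathcal{C}|=1$. *)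

(* Defs.v *)
From HB Require Import structures.
From mathcomp Require Import all_boot all_order all_algebra all_field.
Set Implicit Arguments. Unset Strict Implicit. Unset Printing Implicit Defensive.
Import GRing.Theory.
Local Open Scope ring_scope.

(* F_{q^n} is L : fieldExtType F with #|F| = q and \dim {:L} = n;
   subspaces are F-subspaces {vspace L}.  Flags of length r are indexed 1..r
   by functions nat -> {vspace L} (only indices 1..r are relevant). *)
Section FlagDefs.
Variables (F : finFieldType) (L : fieldExtType F).

Definition vshift (U : {vspace L}) (g : L) : {vspace L} := (U * <[g]>)%VS.

Definition flag_shift (Fl : nat -> {vspace L}) (g : L) : nat -> {vspace L} :=
  fun i => vshift (Fl i) g.

Definition dS (U V : {vspace L}) : nat := (\dim (U + V) - \dim (U :&: V))%N.

Definition dflag (r : nat) (A B : nat -> {vspace L}) : nat :=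
  (\sum_(1 <= i < r.+1) dS (A i) (B i))%N.

Definition flag_eq (r : nat) (A B : nat -> {vspace L}) : bool :=
  [forall i : 'I_r, A i.+1 == B i.+1].

(* Orb_beta(F) = { F beta^j : 0 <= j <= m-1 }, m = multiplicative order of beta *)
Definition Orb (Fl : nat -> {vspace L}) (b : L) (m : nat) : seq (nat -> {vspace L}) :=
  [seq flag_shift Fl (b ^+ j) | j <- iota 0 m].

(* minimum distance of a (nonempty) set of flags: min over distinct pairs,
   0 if all elements coincide (|C| = 1) *)
Definition flag_min_dist (r : nat) (C : seq (nat -> {vspace L})) : nat :=
  let ds := flatten [seq [seq dflag r A B | B <- C & ~~ flag_eq r A B] | A <- C] in
  if ds is d :: ds' then foldr minn d ds' else 0%N.

End FlagDefs.

(* Main.v *)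
Require Import Defs.
From HB Require Import structures.
From mathcomp Require Import all_boot all_order all_algebra all_field.
From mathcomp Require Import zify ring.
Set Implicit Arguments. Unset Strict Implicit. Unset Printing Implicit Defensive.
Import GRing.Theory.

Section Core.
Variables (r l : nat) (t c : nat -> nat) (d : nat) (V : nat -> nat).
Hypothesis hr : 0 < r.
Hypothesis hl : 0 < l.
Hypothesis ht : forall i, 1 <= i <= r -> 0 < t i.
Hypothesis hc : forall i j, 1 <= i <= j -> j <= r -> c j %| c i.
Hypothesis hV : forall s, V s = \sum_(1 <= i < r.+1) (if c i %| l * s then 0 else 2 * t i).
Hypothesis H0 : (forall s, c 1 %| l * s) -> d = 0.
Hypothesis H1 : (exists s, ~~ (c 1 %| l * s)) ->
   (exists2 s, ~~ (c 1 %| l * s) & d = V s) /\ (forall s, ~~ (c 1 %| l * s) -> d <= V s).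

Lemma sum_split (F : nat -> nat) a b e : a <= b -> b <= e ->
  \sum_(a <= i < e) F i = \sum_(a <= i < b) F i + \sum_(b <= i < e) F i.
Proof. move=> h1 h2; exact: big_cat_nat. Qed.

Let li i := lcmn l (c i).
Let cj j := if j <= r then c j else 1.
Let S j := \sum_(1 <= i < j) t i.
Let P j := li 1 <> lcmn l (cj j) /\ forall k, 2 <= k < j -> li 1 = li k.

Lemma li_dvd i j : 1 <= i <= j -> j <= r -> li j %| li i.
Proof.
move=> hij hj; rewrite /li dvdn_lcm dvdn_lcml /=.
exact: dvdn_trans (hc hij hj) (dvdn_lcmr _ _).
Qed.

Lemma cj_dvd i j : 1 <= i <= j -> j <= r.+1 -> cj j %| c i.
Proof.
move=> hij hj; rewrite /cj; case: ifP => hjr; first exact: hc.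
exact: dvd1n.
Qed.

Lemma dvd_li i s : (c i %| l * s) = (li i %| l * s).
Proof. by rewrite /li dvdn_lcm (dvdn_mulr _ (dvdnn l)). Qed.

Lemma S_lt j j' : 1 <= j < j' -> j' <= r.+1 -> S j < S j'.
Proof.
move=> hjj hj'; rewrite /S (@sum_split _ 1 j j'); [|lia|lia].
rewrite -[X in X < _]addn0 ltn_add2l big_ltn; last by case/andP: hjj.
have: 0 < t j by apply: ht; lia.
lia.
Qed.

Lemma S_inj j j' : 1 <= j <= r.+1 -> 1 <= j' <= r.+1 -> S j = S j' -> j = j'.
Proof.
move=> hj hj' hS; case: (ltngtP j j') => // h.
  by have := S_lt (j:=j) (j':=j'); rewrite hS ltnn; move/(_ _ _)/idP; lia.
by have := S_lt (j:=j') (j':=j); rewrite hS ltnn; move/(_ _ _)/idP; lia.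
Qed.

Lemma S_pos j : 2 <= j <= r.+1 -> 0 < S j.
Proof.
move=> hj; have := S_lt (j:=1) (j':=j); rewrite /S big_geq //; apply; lia.
Qed.

Lemma P_d j : 2 <= j <= r.+1 -> P j -> d = 2 * S j.
Proof.
move=> hj [hne heq].
have lower : forall s, ~~ (c 1 %| l * s) -> forall i, 1 <= i < j -> ~~ (c i %| l * s).
  move=> s hs i hi; apply: contra hs; rewrite !dvd_li.
  case: (ltngtP i 1) => [|hi1|->] //; first lia.
  by rewrite -(heq i) //; lia.
pose s := lcmn l (cj j) %/ l.
have hls : l * s = lcmn l (cj j) by rewrite mulnC divnK // dvdn_lcml.
have hs : ~~ (c 1 %| l * s).
  rewrite dvd_li hls; apply/negP => h; apply: hne; apply/eqP; rewrite eqn_dvd h /=.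
  rewrite dvdn_lcm dvdn_lcml /=; apply: dvdn_trans (cj_dvd _ _) (dvdn_lcmr _ _); lia.
have [[s0 hs0 ->] hmin] := H1 (ex_intro _ s hs).
have Vs : V s = 2 * S j.
  rewrite hV (@sum_split _ 1 j); [|lia|lia].
  rewrite [X in _ + X = _]big1_seq ?addn0; last first.
    move=> i /andP[_]; rewrite mem_index_iota => hi.
    rewrite hls; have -> // : c i %| lcmn l (cj j).
    apply: dvdn_trans (dvdn_lcmr _ _).
    rewrite /cj; case: ifP => hjr; last by lia.
    apply: hc; lia.
  rewrite /S big_distrr /=; apply: eq_big_nat => i hi.
  rewrite ifN //; apply: lower => //.
have Vge : forall s', ~~ (c 1 %| l * s') -> 2 * S j <= V s'.
  move=> s' hs'; rewrite hV (@sum_split _ 1 j); [|lia|lia].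
  apply: leq_trans (leq_addr _ _); rewrite /S big_distrr /= leq_eqVlt; apply/orP; left; apply/eqP.
  apply: eq_big_nat => i hi; rewrite ifN //; apply: lower => //.
apply/eqP; rewrite eqn_leq Vge // andbT -Vs; exact: hmin.
Qed.

Lemma exP : li 1 <> l -> exists2 j, 2 <= j <= r.+1 & P j.
Proof.
move=> hne.
pose pj j := (0 < j <= r.+1) && (li 1 != lcmn l (cj j)).
have ex : exists j, pj j.
  exists r.+1; rewrite /pj /cj ltnn lcmn1 leqnn /=; exact/eqP.
case: (ex_minnP ex) => j0 /andP[hj0 hne0] hmin.
have hj0' : j0 != 1.
  apply/eqP=> e; move: hne0; rewrite e /cj.
  have -> : 1 <= r by [].
  by rewrite eqxx.
exists j0; first lia.
split; first exact/eqP.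
move=> k hk; apply/eqP; apply/negPn/negP => hk'.
have : j0 <= k.
  apply: hmin; rewrite /pj /cj.
  have hkr : k <= r by lia.
  rewrite hkr; apply/andP; split; first lia.
  exact: hk'.
lia.
Qed.

Lemma sandwich k : 1 <= k <= r -> li 1 = li r -> li 1 = li k.
Proof.
move=> hk e; apply/eqP; rewrite eqn_dvd (@li_dvd 1 k) ?andbT; [|lia|lia].
rewrite e; apply: li_dvd; lia.
Qed.

Lemma core_main :
  [/\ d = 0 <-> (li 1 = li r /\ li r = l),
      d = 2 * S r.+1 <-> (li 1 = li r /\ li r <> l)
    & forall j, 2 <= j <= r -> (d = 2 * S j <->
        [/\ li 1 <> li r, li 1 <> li j & forall k, 2 <= k < j -> li 1 = li k])].
Proof.
have hSp := S_pos.
case: (eqVneq (li 1) l) => [E|NE].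
  have c1l : c 1 %| l by apply/lcmn_idPl.
  have d0 : d = 0 by apply: H0 => s; exact: dvdn_mulr.
  have lr : li r = l.
    apply/eqP; rewrite eqn_dvd -{1}E li_dvd /= ?dvdn_lcml //; lia.
  split.
  - by rewrite d0 E lr.
  - rewrite d0; split => [h|[_ h] //].
    have := hSp r.+1 ltac:(lia); lia.
  - move=> j hj; rewrite d0; split => [h|[h _ _]].
      have := hSp j ltac:(lia); lia.
    by exfalso; apply: h; rewrite E lr.
have NE' : li 1 <> l by apply/eqP.
have [j0 hj0 Pj0] := exP NE'.
have dj0 := P_d hj0 Pj0.
have key : forall j, 2 <= j <= r.+1 -> (d = 2 * S j <-> P j).
  move=> j hj; split => [h|]; last exact: P_d.
  have e : j0 = j.
    apply: S_inj; [lia|lia|].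
    lia.
  by rewrite -e.
split.
- split => [h|[h1 h2]]; last by exfalso; apply: NE'; rewrite h1 h2.
  have := hSp j0 hj0; lia.
- rewrite key; last lia.
  rewrite /P /cj ltnn lcmn1; split.
    move=> [h1 h2].
    have e : li 1 = li r.
      case: (ltngtP r 1) => [|hr1|->] //; first lia.
      apply: h2; lia.
    by split => //; rewrite -e.
  move=> [h1 h2]; split; first by rewrite h1.
  move=> k hk; apply: sandwich => //; lia.
- move=> j hj; rewrite key; last lia.
  rewrite /P /cj.
  have -> : j <= r by lia.
  split.
    move=> [h1 h2]; split => //.
    move=> e; apply: h1; apply: sandwich => //; lia.
  by move=> [_ h1 h2].
Qed.

End Core.

Lemma foldr_minn_mem (x : nat) ds : foldr minn x ds \in x :: ds.
Proof.
elim: ds => [|y ds IH] /=; first by rewrite mem_seq1.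
rewrite /minn; case: ifP => _; first by rewrite !inE eqxx orbT.
by move: IH; rewrite !inE => /orP[->|->]; rewrite ?orbT.
Qed.

Lemma foldr_minn_le (x : nat) ds y : y \in x :: ds -> foldr minn x ds <= y.
Proof.
elim: ds y => [|z ds IH] y /=; first by rewrite mem_seq1 => /eqP->.
rewrite !inE geq_min => /or3P[/eqP->|/eqP->|h].
- by rewrite IH ?orbT // mem_head.
- by rewrite leqnn.
- by rewrite IH ?orbT // inE h orbT.
Qed.

Lemma mem_ds (T : Type) (P : T -> T -> bool) (D : T -> T -> nat) (f : nat -> T)
  (s : seq nat) x :
  (x \in flatten [seq [seq D A B | B <- [seq f i | i <- s] & P A B] | A <- [seq f i | i <- s]])
  <-> exists a b, [/\ a \in s, b \in s, P (f a) (f b) & x = D (f a) (f b)].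
Proof.
have -> : flatten [seq [seq D A B | B <- [seq f i | i <- s] & P A B] | A <- [seq f i | i <- s]]
  = flatten [seq [seq D (f a) (f b) | b <- s & P (f a) (f b)] | a <- s].
  by rewrite -map_comp; congr flatten; apply: eq_map => a /=; rewrite filter_map -map_comp.
split.
  move/flattenP => [s' /mapP[a ha ->] /mapP[b]].
  rewrite mem_filter => /andP[hP hb] ->.
  by exists a, b.
move=> [a [b [ha hb hP ->]]]; apply/flattenP.
exists [seq D (f a) (f b) | b <- s & P (f a) (f b)].
  by apply/mapP; exists a.
by apply/mapP; exists b => //; rewrite mem_filter hP.
Qed.

Lemma chain_rel (e : rel nat) (g : nat -> nat) r :
  reflexive e -> transitive e ->
  (forall i, 1 <= i < r -> e (g i) (g i.+1)) ->
  forall i j, 1 <= i <= j -> j <= r -> e (g i) (g j).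
Proof.
move=> hrefl htr h i j /andP[h1 h2]; elim: j h2 => [|j IH] hij hj; first lia.
case: (eqVneq i j.+1) => [->|hne]; first exact: hrefl.
apply: (htr (g j)); first by apply: IH; lia.
apply: h; lia.
Qed.

Local Open Scope ring_scope.

Section FieldPart.
Variables (F : finFieldType) (L : fieldExtType F).

Lemma mem_shift (U : {vspace L}) (g x : L) : g != 0 ->
  (x \in vshift U g) = (x / g \in U).
Proof.
move=> g0; rewrite /vshift -limg_amulr.
apply/memv_imgP/idP => [[u Uu ->]|h].
  by rewrite lfunE /= mulfK.
by exists (x / g) => //; rewrite lfunE /= divfK.
Qed.

Lemma dim_shift (U : {vspace L}) (g : L) : g != 0 -> \dim (vshift U g) = \dim U.
Proof.
move=> g0; rewrite /vshift -limg_amulr limg_dim_eq //.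
have := @lker0_amulr F L g; rewrite unitfE g0 => /(_ isT) /eqP ->.
by rewrite capv0.
Qed.

Lemma memK_mul (K : {subfield L}) a b : a \in K -> b \in K -> a * b \in K.
Proof. rewrite !Fermat's_little_theorem exprMn => /eqP-> /eqP-> //. Qed.

Lemma memK_div (K : {subfield L}) a b : a \in K -> b \in K -> a / b \in K.
Proof. rewrite !Fermat's_little_theorem exprMn exprVn => /eqP-> /eqP-> //. Qed.

Lemma shift_eq (K : {subfield L}) g h : g != 0 -> h != 0 ->
  (vshift K g == vshift K h) = (g / h \in K).
Proof.
move=> g0 h0; apply/eqP/idP => [e|gh].
  have : g \in vshift K g by rewrite mem_shift // divff // mem1v.
  by rewrite e mem_shift.
apply/vspaceP => x; rewrite !mem_shift //; apply/idP/idP => hx.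
  have -> : x / h = (x / g) * (g / h) by rewrite mulrA divfK.
  exact: memK_mul.
have -> : x / g = (x / h) / (g / h) by rewrite invf_div mulrA divfK.
exact: memK_div.
Qed.

Lemma dS_shift (K : {subfield L}) g h : g != 0 -> h != 0 ->
  dS (vshift K g) (vshift K h) = if g / h \in K then 0%N else (2 * \dim K)%N.
Proof.
move=> g0 h0; case: ifP => gh.
  by have /eqP -> := (etrans (shift_eq K g0 h0) gh); rewrite /dS addvv capvv subnn.
have cap0 : (vshift K g :&: vshift K h)%VS = 0%VS.
  apply/eqP; rewrite -subv0; apply/subvP => x; rewrite memv_cap !mem_shift // memv0.
  case/andP => a b; apply/negPn/negP => x0; move/negbT: gh; apply/negP/negPn.
  have -> : g / h = (x / h) / (x / g).
    by field; rewrite x0 h0 g0.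
  exact: memK_div.
rewrite /dS; have := dimv_sum_cap (vshift K g) (vshift K h).
rewrite cap0 dimv0 addn0 !dim_shift // => ->; rewrite mul2n -addnn; exact: subn0.
Qed.

End FieldPart.

Unset Implicit Arguments.

Theorem theorem4p15
  (F : finFieldType) (L : fieldExtType F) (q n : nat)
  (hq : #|F| = q) (hn : \dim {:L} = n)
  (alpha : L) (halpha : (q ^ n).-1.-primitive_root alpha)
  (r : nat) (t : nat -> nat) (hr : (0 < r)%N)
  (ht1 : (1 <= t 1)%N) (htr : (t r < n)%N)
  (htlt : forall i, (1 <= i < r)%N -> (t i < t i.+1)%N)
  (htdvd : forall i, (1 <= i < r)%N -> (t i %| t i.+1)%N)
  (htn : forall i, (1 <= i <= r)%N -> (t i %| n)%N)
  (K : nat -> {subfield L})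
  (hK : forall i, (1 <= i <= r)%N -> \dim (K i) = t i)
  (beta : L) (hbeta : beta != 0) (m : nat) (hm : m.-primitive_root beta)
  (l : nat) (hl : (l %| (q ^ n).-1)%N)
  (hgen : forall x : L, (exists k : nat, x = beta ^+ k) <-> (exists k : nat, x = (alpha ^+ l) ^+ k)) :
  let Fl : nat -> {vspace L} := fun i => (K i : {vspace L}) in
  let c : nat -> nat := fun i => ((q ^ n).-1 %/ (q ^ t i).-1)%N in
  let li : nat -> nat := fun i => lcmn l (c i) in
  let d := flag_min_dist r (Orb Fl beta m) in
  [/\ d = 0%N <-> (li 1%N = li r /\ li r = l),
      d = (2 * \sum_(1 <= i < r.+1) t i)%N <-> (li 1%N = li r /\ li r <> l)
    & forall j, (2 <= j <= r)%N ->
        (d = (2 * \sum_(1 <= i < j) t i)%N <->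
         [/\ li 1%N <> li r, li 1%N <> li j
           & forall k, (2 <= k < j)%N -> li 1%N = li k])].
Proof.
move=> Fl c li d.
have q1 : (1 < q)%N by rewrite -hq; exact: finNzRing_gt1.
have hti : forall i, (1 <= i <= r)%N -> (1 <= t i)%N.
  move=> i hi; have := @chain_rel leq t r leqnn leq_trans
    (fun i hi => ltnW (htlt i hi)) 1 i; lia.
have htdiv : forall i j, (1 <= i <= j)%N -> (j <= r)%N -> (t i %| t j)%N :=
  @chain_rel dvdn t r dvdnn dvdn_trans htdvd.
have n0 : (0 < n)%N by lia.
have N0 : (0 < (q ^ n).-1)%N.
  have := ltn_exp2l 0 n q1; rewrite expn0 n0; lia.
have Qpos : forall i, (1 <= i <= r)%N -> (0 < (q ^ t i).-1)%N.
  move=> i hi; have := ltn_exp2l 0 (t i) q1; rewrite expn0; have := hti i hi; lia.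
have Qdvd : forall i, (1 <= i <= r)%N -> ((q ^ t i).-1 %| (q ^ n).-1)%N.
  move=> i hi; move/dvdnP: (htn i hi) => [u ->].
  by rewrite mulnC expnM; exact: dvdn_pred_predX.
have Ndef : forall i, (1 <= i <= r)%N -> (q ^ n).-1 = (c i * (q ^ t i).-1)%N.
  by move=> i hi; rewrite /c divnK // Qdvd.
have cchain : forall i j, (1 <= i <= j)%N -> (j <= r)%N -> (c j %| c i)%N.
  move=> i j hij hj.
  have hi : (1 <= i <= r)%N by lia.
  have hj' : (1 <= j <= r)%N by lia.
  move/dvdnP: (htdiv i j hij hj) => [u hu].
  have : ((q ^ t i).-1 %| (q ^ t j).-1)%N by rewrite hu mulnC expnM; exact: dvdn_pred_predX.
  move/dvdnP => [w hw].
  have e : c i = (c j * w)%N.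
    have := Ndef i hi; rewrite (Ndef j hj') hw mulnA => /eqP.
    by rewrite eqn_pmul2r ?Qpos // => /eqP ->.
  by rewrite e dvdn_mulr.
have alpha_mem : forall i k, (1 <= i <= r)%N -> (alpha ^+ k \in K i) = (c i %| k)%N.
  move=> i k hi.
  rewrite Fermat's_little_theorem hq (hK i hi) -exprM (eq_prim_root_expr halpha).
  have Q1 : (1 <= q ^ t i)%N by have := Qpos i hi; lia.
  rewrite eqn_mod_dvd; last by rewrite leq_pmulr.
  have -> : (k * q ^ t i - k = k * (q ^ t i).-1)%N.
    by rewrite -subn1 mulnBr muln1.
  by rewrite (Ndef i hi) dvdn_pmul2r // Qpos.
have [k0 hk0] : exists k0, beta = alpha ^+ (l * k0).
  have [k hk] := proj1 (hgen beta) (ex_intro _ 1%N (esym (expr1 beta))).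
  by exists k; rewrite exprM.
have m0 : (0 < m)%N := prim_order_gt0 hm.
have hl0 : (0 < l)%N := dvdn_gt0 N0 hl.
pose f j := flag_shift Fl (beta ^+ j).
pose V s := (\sum_(1 <= i < r.+1) (if c i %| l * s then 0 else 2 * t i))%N.
have bne : forall a, beta ^+ a != 0 by move=> a; rewrite expf_neq0.
have pairG : forall a b s, beta ^+ a / beta ^+ b = alpha ^+ (l * s) ->
    flag_eq r (f a) (f b) = (c 1 %| l * s)%N /\ dflag r (f a) (f b) = V s.
  move=> a b s e; split.
    rewrite /flag_eq /f /flag_shift /Fl; apply/forallP/idP => [h|h i].
      have := h (Ordinal hr); rewrite /= shift_eq // e alpha_mem //; lia.
    rewrite shift_eq // e alpha_mem; last by have := ltn_ord i; lia.
    apply: dvdn_trans h; apply: cchain; have := ltn_ord i; lia.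
  rewrite /dflag /V; apply: eq_big_nat => i hi.
  have hi' : (1 <= i <= r)%N by lia.
  by rewrite /f /flag_shift /Fl dS_shift // e alpha_mem // hK.
have fromab : forall a b, (b < m)%N -> exists s, beta ^+ a / beta ^+ b = alpha ^+ (l * s).
  move=> a b hb; exists (k0 * (a + (m - b)))%N.
  rewrite mulnA exprM -hk0 exprD.
  have hinv : beta ^+ b * beta ^+ (m - b) = 1.
    by rewrite -exprD subnKC ?prim_expr_order // ltnW.
  by rewrite -[LHS]mulr1 -hinv mulrA divfK.
have froms : forall s, exists2 a, (a < m)%N & beta ^+ a / beta ^+ 0 = alpha ^+ (l * s).
  move=> s; have [k hk] := proj2 (hgen ((alpha ^+ l) ^+ s)) (ex_intro _ s erefl).
  exists (k %% m)%N; first by rewrite ltn_pmod.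
  by rewrite expr0 divr1 (prim_expr_mod hm) exprM hk.
pose ds := flatten [seq [seq dflag r A B | B <- [seq f i | i <- iota 0 m] & ~~ flag_eq r A B]
                   | A <- [seq f i | i <- iota 0 m]].
have dE : d = (if ds is x :: ds' then foldr minn x ds' else 0)%N by [].
have inds : forall s, ~~ (c 1 %| l * s)%N -> V s \in ds.
  move=> s hs; have [a ha e] := froms s; have [h1 h2] := pairG _ _ _ e.
  apply/mem_ds; exists a, 0%N; split.
  - by rewrite mem_iota.
  - by rewrite mem_iota.
  - by rewrite h1.
  - by rewrite h2.
have dsV : forall x, x \in ds -> exists2 s, ~~ (c 1 %| l * s)%N & x = V s.
  move=> x /mem_ds [a [b [ha hb hP ->]]].
  move: hb; rewrite mem_iota => hb.
  have [s e] := fromab a b ltac:(lia).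
  have [h1 h2] := pairG _ _ _ e.
  by exists s; rewrite -?h1 ?h2.
have H0 : (forall s, c 1 %| l * s)%N -> d = 0%N.
  move=> h; rewrite dE; case E: ds => [|x ds'] //.
  have : x \in ds by rewrite E mem_head.
  by move/dsV => [s]; rewrite h.
have H1 : (exists s, ~~ (c 1 %| l * s)%N) ->
   (exists2 s, ~~ (c 1 %| l * s)%N & d = V s) /\ (forall s, ~~ (c 1 %| l * s)%N -> (d <= V s)%N).
  move=> [s0 hs0]; have := inds s0 hs0; rewrite dE; case E: ds => [|x ds'] // _.
  split.
    apply: dsV; rewrite E; exact: foldr_minn_mem.
  move=> s hs; apply: foldr_minn_le; rewrite -E; exact: inds.
exact: (@core_main r l t c d V hr hl0 hti cchain (fun s => erefl) H0 H1).
Qed.
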